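(* Let $D=N_1\ltimes\dots\ltimes N_n$ be the dynamics of an $\mathrm{RNC}_+$ with input domain $U$, let $D'=\langle U,X',f\rangle$ be subdynamics of $D$, let $\lambda_\Sigma:U\to\Sigma$ be a symbol grounding and $u_e\in U$. For every $i\in[n]$ and every $\vec x,\vec y\in X'_{[i]}$, if $\bar\rho_i(\vec x)=\bar\rho_i(\vec y)$ then $\vec x\sim\vec y$.
   Context: Neuron $N_i$ has state update $f_i(x_i,\langle u,x_1,\dots,x_{i-1}\rangle)=\tanh(w_i x_i+\beta_i(u,x_1,\dots,x_{i-1}))$ with $w_i>0$ and $\beta_i$ a feedforward network; $\bar f_i(\langle x_1,\dots,x_i\rangle,u)=\langle f_1(x_1,u_1),\dots,f_i(x_i,u_i)\rangle$ with $u_j=\langle u,x_1,\dots,x_{j-1}\rangle$. $X'\subseteq X_1\times\dots\times X_n$ satisfies $f(X'\times U)\subseteq X'$, and $X'_{[i]}=\{\langle z_1,\dots,z_i\rangle:\exists z_{i+1},\dots,z_n,\ \langle z_1,\dots,z_n\rangle\in X'\}$. For $\vec x=\langle x_1,\dots,x_i\rangle$, define $x_{j,0}=x_j$, $x_{j,t}=f_j(x_{j,t-1},\langle u_e,x_{1,t-1},\dots,x_{j-1,t-1}\rangle)$, let $\mathcal{S}^*_j(u_e,x_1,\dots,x_j)=\lim_t x_{j,t}$ (this limit exists) and $\bar{\mathcal{S}}^*_i(u_e,\vec x)=\langle\mathcal S^*_1(u_e,x_1),\dots,\mathcal S^*_i(u_e,x_1,\dots,x_i)\rangle$. On $X'_{[i]}$: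 $\sim_e$ is the smallest equivalence relation with $\vec x\sim_e\vec y$ whenever $\bar{\mathcal S}^*_i(u_e,\vec x)=\bar{\mathcal S}^*_i(u_e,\vec y)$; $\sim$ is the smallest equivalence relation containing $\sim_e$ and such that $\vec x\sim\vec y$ implies $\bar f_i(\vec x,u)\sim\bar f_i(\vec y,v)$ for all $u,v\in U$ with $\lambda_\Sigma(u)=\lambda_\Sigma(v)$; $[\vec x]$ denotes the $\sim$-class. Pivots: for neuron $j$ with $w_j>1$, let $p_-^{(j)},p_+^{(j)}$ be the pivots $p_-=p_-^{v_-}$, $p_+=p_+^{v_+}$ of $g_v(x)=x-\tanh(w_jx+v)$, where $p_-^v<p_+^v$ are the local maximum/minimum points of $g_v$ and $v_-$ (resp. $v_+$) is the unique $v$ with $g_v(p_-^v)=0$ (resp. $g_v(p_+^v)=0$). Let $\kappa_j(x)=1$ if $x\le p_-^{(j)}$, $2$ if $p_-^{(j)}<x<p_+^{(j)}$, $3$ if $p_+^{(j)}\le x$ (when $w_j\le1$, $\kappa_j$ is an arbitrary map into $\{1,2,3\}$). Set $\eta_j(x_1,\dots,x_j)=\kappa_j(\mathcal S^*_j(u_e,x_1,\dots,x_j))$, $\bar\eta_i(\vec x)=\langle\eta_1(x_1),\dots,\eta_i(x_1,\dots,x_i)\rangle\in\{1,2,3\}^i$, and $\bar\rho_i(\vec x)=\min\bar\eta_i([\vec x])$, the minimum in the lexicographic order on $\{1,2,3\}^i$. *)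

(* Defs.v *)
From Stdlib Require Import Reals List ClassicalEpsilon.
From Coquelicot Require Import Coquelicot.
Import ListNotations.
Open Scope R_scope.

Definition tanh (x : R) : R := (exp x - exp (- x)) / (exp x + exp (- x)).

Fixpoint dot (a b : list R) : R :=
  match a, b with
  | x :: a', y :: b' => x * y + dot a' b'
  | _, _ => 0
  end.

(* A layer: weight matrix (rows), bias vector, activation function. *)
Definition layer := (list (list R) * list R * (R -> R))%type.

Definition eval_layer (l : layer) (v : list R) : list R :=
  let '(W, b, sigma) := l in
  map (fun rb => sigma (dot (fst rb) v + snd rb)) (combine W b).

Definition eval_ffn (ls : list layer) (c : list R) (c0 : R) (v : list R) : R :=
  dot c (fold_left (fun acc l => eval_layer l acc) ls v) + c0.

Definition is_ffn (g : list R -> R) : Prop :=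
  exists (ls : list layer) (c : list R) (c0 : R),
    List.Forall (fun l : layer => forall x : R, continuity_pt (snd l) x) ls /\
    forall v, g v = eval_ffn ls c c0 v.

(* ---------- Cascade dynamics on state prefixes (lists) ----------
   Neurons are 0-indexed: neuron j (paper's N_{j+1}) has weight w j and
   bias network beta j, fed with  u ++ [x_1; ...; x_j]. *)
Definition fbar (w : nat -> R) (beta : nat -> list R -> R)
  (x u : list R) : list R :=
  map (fun j => tanh (w j * nth j x 0 + beta j (u ++ firstn j x)))
      (seq 0 (length x)).

(* S*_j(u_e, x_1, ..., x_{j+1}) for 0-indexed neuron j. *)
Definition Sstar (w : nat -> R) (beta : nat -> list R -> R) (ue : list R)
  (j : nat) (x : list R) : R :=
  real (Lim_seq (fun t =>
    nth j (Nat.iter t (fun s => fbar w beta s ue) (firstn (S j) x)) 0)).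

Definition Sbar w beta ue (x : list R) : list R :=
  map (fun j => Sstar w beta ue j x) (seq 0 (length x)).

Definition Xpre (X' : list R -> Prop) (i : nat) (y : list R) : Prop :=
  exists z, X' z /\ y = firstn i z.

Inductive eqclos (D : list R -> Prop) (r : list R -> list R -> Prop)
  : list R -> list R -> Prop :=
| eqc_base x y : D x -> D y -> r x y -> eqclos D r x y
| eqc_refl x : D x -> eqclos D r x x
| eqc_sym x y : eqclos D r x y -> eqclos D r y x
| eqc_trans x y z : eqclos D r x y -> eqclos D r y z -> eqclos D r x z.

Definition sim_e w beta ue X' i : list R -> list R -> Prop :=
  eqclos (Xpre X' i) (fun x y => Sbar w beta ue x = Sbar w beta ue y).

Inductive sim (w : nat -> R) (beta : nat -> list R -> R) (ue : list R)
  (X' : list R -> Prop) (U : list R -> Prop) {Sigma : Type}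
  (lam : list R -> Sigma) (i : nat) : list R -> list R -> Prop :=
| sim_base x y : sim_e w beta ue X' i x y -> sim w beta ue X' U lam i x y
| sim_refl x : Xpre X' i x -> sim w beta ue X' U lam i x x
| sim_sym x y : sim w beta ue X' U lam i x y -> sim w beta ue X' U lam i y x
| sim_trans x y z : sim w beta ue X' U lam i x y ->
    sim w beta ue X' U lam i y z -> sim w beta ue X' U lam i x z
| sim_step x y u v : sim w beta ue X' U lam i x y -> U u -> U v ->
    lam u = lam v ->
    sim w beta ue X' U lam i (fbar w beta x u) (fbar w beta y v).

Definition gv (w v x : R) : R := x - tanh (w * x + v).

Definition loc_max (f : R -> R) (p : R) : Prop :=
  exists eps, 0 < eps /\ forall y, Rabs (y - p) < eps -> f y <= f p.
Definition loc_min (f : R -> R) (p : R) : Prop :=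
  exists eps, 0 < eps /\ forall y, Rabs (y - p) < eps -> f p <= f y.

Definition pm_v (w v : R) : R := epsilon (inhabits 0) (loc_max (gv w v)).
Definition pp_v (w v : R) : R := epsilon (inhabits 0) (loc_min (gv w v)).
Definition v_minus (w : R) : R :=
  epsilon (inhabits 0) (fun v => gv w v (pm_v w v) = 0).
Definition v_plus (w : R) : R :=
  epsilon (inhabits 0) (fun v => gv w v (pp_v w v) = 0).
Definition pivot_minus (w : R) : R := pm_v w (v_minus w).
Definition pivot_plus (w : R) : R := pp_v w (v_plus w).

(* kappa for a neuron with weight wj > 1 *)
Definition kappa_pivot (wj x : R) : nat :=
  if Rle_dec x (pivot_minus wj) then 1%nat
  else if Rlt_dec x (pivot_plus wj) then 2%nat else 3%nat.

Definition etabar w beta ue (kappa : nat -> R -> nat) (x : list R) : list nat :=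
  map (fun j => kappa j (Sstar w beta ue j x)) (seq 0 (length x)).

Fixpoint lex_le (a b : list nat) : Prop :=
  match a, b with
  | [], _ => True
  | _ :: _, [] => False
  | x :: a', y :: b' => (x < y)%nat \/ (x = y /\ lex_le a' b')
  end.

Definition rho w beta ue X' U {Sigma : Type} (lam : list R -> Sigma)
  (kappa : nat -> R -> nat) (i : nat) (x : list R) : list nat :=
  epsilon (inhabits []) (fun s =>
    (exists y, sim w beta ue X' U lam i x y /\ etabar w beta ue kappa y = s) /\
    forall y, sim w beta ue X' U lam i x y ->
      lex_le s (etabar w beta ue kappa y)).

(* Main.v *)
Require Import Defs.
From Stdlib Require Import Reals Lra Lia Psatz List Classical ClassicalEpsilon Wf_nat Arith.
From Coquelicot Require Import Coquelicot.
Open Scope R_scope.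
Notation tanh := Defs.tanh.

Lemma tanh_den x : exp x + exp (- x) > 0.
Proof. pose proof (exp_pos x); pose proof (exp_pos (-x)); lra. Qed.

Lemma tanh_derive x : is_derive tanh x (1 - tanh x ^ 2).
Proof.
  unfold tanh. pose proof (tanh_den x).
  auto_derive. lra.
  field. lra.
Qed.

Lemma tanh_bounds x : -1 < tanh x < 1.
Proof.
  unfold tanh. pose proof (tanh_den x). pose proof (exp_pos x); pose proof (exp_pos (-x)).
  split; [apply Rlt_div_r | apply Rlt_div_l]; lra.
Qed.

Lemma tanh_dpl x : derivable_pt_lim tanh x (1 - tanh x ^ 2).
Proof. apply is_derive_Reals, tanh_derive. Qed.

Lemma tanh_cont x : continuity_pt tanh x.
Proof. apply derivable_continuous_pt. exists (1 - tanh x ^2). apply tanh_dpl. Qed.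

Lemma tanh_incr a b : a < b -> tanh a < tanh b.
Proof.
  intros H. destruct (MVT_cor2 tanh (fun x => 1 - tanh x ^ 2) a b H) as [c [E _]].
  { intros; apply tanh_dpl. }
  pose proof (tanh_bounds c). assert (0 < 1 - tanh c ^2) by nra. nra.
Qed.

Lemma tanh_le a b : a <= b -> tanh a <= tanh b.
Proof. intros [H|H]. left; now apply tanh_incr. subst; lra. Qed.

Lemma tanh_lip a b : Rabs (tanh a - tanh b) <= Rabs (a - b).
Proof.
  destruct (Rtotal_order a b) as [H|[H|H]].
  - destruct (MVT_cor2 tanh (fun x => 1 - tanh x ^ 2) a b H) as [c [E _]].
    { intros; apply tanh_dpl. }
    pose proof (tanh_bounds c). pose proof (tanh_incr a b H).
    rewrite !Rabs_left by lra. nra.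
  - subst. rewrite Rminus_diag, Rabs_R0. apply Rabs_pos.
  - destruct (MVT_cor2 tanh (fun x => 1 - tanh x ^ 2) b a H) as [c [E _]].
    { intros; apply tanh_dpl. }
    pose proof (tanh_bounds c). pose proof (tanh_incr b a H).
    rewrite !Rabs_right by lra. nra.
Qed.

Lemma mvt_tanh a c : a < c -> exists xi, tanh c - tanh a = (1 - tanh xi ^ 2) * (c - a) /\ a < xi < c.
Proof. intros H. apply (MVT_cor2 tanh (fun x => 1 - tanh x ^ 2) a c H). intros; apply tanh_dpl. Qed.

Lemma fp_small w b x y : 0 < w <= 1 -> tanh (w*x+b) = x -> tanh (w*y+b) = y -> x < y -> False.
Proof.
  intros Hw Hx Hy Hxy.
  set (a := w*x+b). set (c := w*y+b). set (m := (a+c)/2).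
  assert (a < c) by (unfold a, c; nra).
  destruct (mvt_tanh a m) as [x1 [E1 H1]]. unfold m; lra.
  destruct (mvt_tanh m c) as [x2 [E2 H2]]. unfold m; lra.
  assert (E : y - x = (1 - tanh x1 ^2) * (m - a) + (1 - tanh x2 ^ 2) * (c - m)).
  { unfold a,c in *. rewrite Hx, Hy in *. lra. }
  assert (Ma: m - a = w * (y - x) / 2) by (unfold m, a, c; field).
  assert (Mc: c - m = w * (y - x) / 2) by (unfold m, a, c; field).
  rewrite Ma, Mc in E.
  assert (T1: tanh x1 ^ 2 = 0 /\ tanh x2 ^ 2 = 0).
  { assert (0 <= tanh x1 ^2) by nra. assert (0 <= tanh x2 ^2) by nra.
    assert (Hd : 0 < y - x) by lra.
    assert (2 = w * ((1 - tanh x1 ^2) + (1 - tanh x2 ^ 2))).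
    { apply (Rmult_eq_reg_r ((y-x)/2)). nra. lra. }
    nra. }
  destruct T1 as [T1 T2].
  assert (tanh x1 = 0) by nra. assert (tanh x2 = 0) by nra.
  pose proof (tanh_incr x1 x2 ltac:(lra)). lra.
Qed.

Lemma fp_mvt w b x y : tanh (w*x+b) = x -> tanh (w*y+b) = y -> x < y -> 0 < w ->
  exists t, x < t < y /\ (1 - t^2) * w = 1.
Proof.
  intros Hx Hy Hxy Hw.
  destruct (mvt_tanh (w*x+b) (w*y+b)) as [xi [E H]]. nra.
  exists (tanh xi). split.
  - pose proof (tanh_incr (w*x+b) xi ltac:(lra)). pose proof (tanh_incr xi (w*y+b) ltac:(lra)). lra.
  - rewrite Hx, Hy in E. apply (Rmult_eq_reg_r (y - x)); [|lra]. nra.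
Qed.

Lemma fp_big w b x y tau : 1 < w -> 0 <= tau -> tau ^ 2 = 1 - / w ->
  tanh (w*x+b) = x -> tanh (w*y+b) = y -> x < y ->
  (y <= - tau \/ (- tau < x /\ y < tau) \/ tau <= x) -> False.
Proof.
  intros Hw Ht Ht2 Hx Hy Hxy Hr.
  destruct (fp_mvt w b x y Hx Hy Hxy ltac:(lra)) as [t [Ht' E]].
  assert (t ^ 2 = tau ^ 2).
  { rewrite Ht2. apply (Rmult_eq_reg_r w); [|lra]. rewrite Rmult_minus_distr_r, Rinv_l by lra. lra. }
  destruct Hr as [Hr|[Hr|Hr]]; nra.
Qed.

Lemma fp_four w b p1 p2 p3 p4 : 0 < w -> p1 < p2 -> p2 < p3 -> p3 < p4 ->
  tanh (w*p1+b) = p1 -> tanh (w*p2+b) = p2 -> tanh (w*p3+b) = p3 -> tanh (w*p4+b) = p4 -> False.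
Proof.
  intros Hw H12 H23 H34 F1 F2 F3 F4.
  destruct (Rle_lt_dec w 1) as [Hw1|Hw1].
  - exact (fp_small w b p1 p2 ltac:(lra) F1 F2 H12).
  - set (tau := sqrt (1 - / w)).
    assert (0 < / w < 1). { split. apply Rinv_0_lt_compat; lra. rewrite <- Rinv_1. apply Rinv_lt_contravar; lra. }
    assert (Ht : 0 <= tau) by apply sqrt_pos.
    assert (Ht2 : tau ^ 2 = 1 - / w). { unfold tau. simpl. rewrite Rmult_1_r. apply sqrt_sqrt. lra. }
    destruct (Rle_lt_dec p2 (- tau)).
    + apply (fp_big w b p1 p2 tau); auto.
    + destruct (Rlt_le_dec p3 tau).
      * apply (fp_big w b p2 p3 tau); auto.
      * apply (fp_big w b p3 p4 tau); auto.
Qed.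

Lemma conv (w : R) (bseq : nat -> R) (bs : R) (x : nat -> R) : 0 < w -> is_lim_seq bseq bs ->
  (forall t, x (S t) = tanh (w * x t + bseq t)) ->
  exists L : R, is_lim_seq x L /\ tanh (w * L + bs) = L.
Proof.
  intros Hw Hb Hx.
  assert (Hb' : forall eps : posreal, eventually (fun n => Rabs (bseq n - bs) < eps)) by exact (proj2 (is_lim_seq_spec _ _) Hb).
  assert (Tup : forall c, tanh (w*c+bs) > c -> exists N, forall t, (N <= t)%nat -> x t >= c -> x (S t) >= c).
  { intros c Hc. destruct (Hb' (mkposreal _ (Rgt_minus _ _ Hc))) as [N HN]. exists N.
    intros t Ht Hxt. specialize (HN t Ht). simpl in HN. rewrite Hx.
    pose proof (tanh_le (w*c + bseq t) (w * x t + bseq t) ltac:(nra)).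
    pose proof (tanh_lip (w*c+bseq t) (w*c+bs)).
    replace (w * c + bseq t - (w * c + bs)) with (bseq t - bs) in H0 by ring.
    assert (H3 := Rle_lt_trans _ _ _ H0 HN). apply Rabs_def2 in H3. lra. }
  assert (Tdn : forall c, tanh (w*c+bs) < c -> exists N, forall t, (N <= t)%nat -> x t <= c -> x (S t) <= c).
  { intros c Hc. destruct (Hb' (mkposreal _ (Rgt_minus _ _ Hc))) as [N HN]. exists N.
    intros t Ht Hxt. specialize (HN t Ht). simpl in HN. rewrite Hx.
    pose proof (tanh_le (w * x t + bseq t) (w*c + bseq t) ltac:(nra)).
    pose proof (tanh_lip (w*c+bseq t) (w*c+bs)).
    replace (w * c + bseq t - (w * c + bs)) with (bseq t - bs) in H0 by ring.
    assert (H3 := Rle_lt_trans _ _ _ H0 HN). apply Rabs_def2 in H3. lra. }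
  set (M := Rmax 1 (Rabs (x O))).
  assert (Hbd : forall t, - M <= x t <= M).
  { intros [|t]. unfold M. pose proof (Rmax_r 1 (Rabs (x O))). split_Rabs; lra.
    rewrite Hx. pose proof (tanh_bounds (w * x t + bseq t)). unfold M. pose proof (Rmax_l 1 (Rabs (x O))). lra. }
  destruct (ex_LimSup_seq x) as [ls Hls]. destruct (ex_LimInf_seq x) as [li Hli].
  pose proof (is_LimSup_LimInf_seq_le x ls li Hls Hli) as Hle.
  destruct ls as [ls| |]; [| destruct (Hls (M+1) O) as [n [_ Hn]]; specialize (Hbd n); lra
                           | destruct (Hls (-M-1)) as [N HN]; specialize (HN N (le_n _)); specialize (Hbd N); lra].
  destruct li as [li| |]; [| destruct (Hli (M+1)) as [N HN]; specialize (HN N (le_n _)); specialize (Hbd N); lra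
                           | destruct (Hli (-M-1) O) as [n [_ Hn]]; specialize (Hbd n); lra].
  simpl in Hle.
  destruct Hle as [Hlt|Heq].
  - exfalso.
    assert (Fix : forall c, li < c < ls -> tanh (w*c+bs) = c).
    { intros c Hc.
      assert (Inf_lo : forall N, exists n, (N <= n)%nat /\ x n < c).
      { intros N. destruct (Hli (mkposreal (c - li) ltac:(lra))) as [H1 _]. destruct (H1 N) as [n [? ?]].
        exists n. simpl in *. split; auto; lra. }
      assert (Inf_hi : forall N, exists n, (N <= n)%nat /\ x n > c).
      { intros N. destruct (Hls (mkposreal (ls - c) ltac:(lra))) as [H1 _]. destruct (H1 N) as [n [? ?]].
        exists n. simpl in *. split; auto; lra. }
      destruct (Rtotal_order (tanh (w*c+bs)) c) as [H|[H|H]]; auto.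
      - destruct (Tdn c H) as [N HN]. destruct (Inf_lo N) as [n [Hn1 Hn2]].
        assert (forall k, x (k + n)%nat <= c).
        { induction k. simpl; lra. simpl. apply HN; auto. lia. }
        destruct (Inf_hi n) as [m [Hm1 Hm2]]. specialize (H0 (m - n)%nat).
        replace (m - n + n)%nat with m in H0 by lia. lra.
      - destruct (Tup c H) as [N HN]. destruct (Inf_hi N) as [n [Hn1 Hn2]].
        assert (forall k, x (k + n)%nat >= c).
        { induction k. simpl; lra. simpl. apply HN; auto. lia. }
        destruct (Inf_lo n) as [m [Hm1 Hm2]]. specialize (H0 (m - n)%nat).
        replace (m - n + n)%nat with m in H0 by lia. lra. }
    set (d := (ls - li)/5).
    apply (fp_four w bs (li + d) (li + 2*d) (li + 3*d) (li+4*d) Hw); try (unfold d; lra);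
      apply Fix; unfold d; lra.
  - subst li.
    assert (Hl : is_lim_seq x ls) by (apply is_LimSup_LimInf_lim_seq; auto).
    exists ls. split; auto.
    assert (H1 : is_lim_seq (fun t => x (S t)) ls) by (apply -> is_lim_seq_incr_1; auto).
    assert (H2 : is_lim_seq (fun t => tanh (w * x t + bseq t)) (tanh (w*ls + bs))).
    { apply is_lim_seq_continuous. apply tanh_cont.
      apply is_lim_seq_plus'; auto. apply (is_lim_seq_scal_l x w ls) in Hl. exact Hl. }
    apply (is_lim_seq_ext _ (fun t => x (S t))) in H2; [| intros; symmetry; apply Hx].
    apply is_lim_seq_unique in H1. apply is_lim_seq_unique in H2. rewrite H1 in H2. injection H2; auto.
Qed.

Lemma g_dpl w v y : derivable_pt_lim (gv w v) y (1 - w * (1 - tanh (w*y+v) ^ 2)).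
Proof.
  assert (H1 : derivable_pt_lim (fun x => w * x + v) y (w * 1 + 0)).
  { apply (derivable_pt_lim_plus (fun x => w * x) (fun _ => v)).
    apply (derivable_pt_lim_scal id). apply derivable_pt_lim_id. apply derivable_pt_lim_const. }
  assert (H2 := derivable_pt_lim_comp (fun x => w*x+v) tanh y _ _ H1 (tanh_dpl _)).
  assert (H3 := derivable_pt_lim_minus id (comp tanh (fun x => w*x+v)) y _ _ (derivable_pt_lim_id y) H2).
  unfold gv. replace (1 - w * (1 - tanh (w * y + v) ^ 2)) with (1 - (1 - tanh (w * y + v) ^ 2) * (w * 1 + 0)) by ring.
  exact H3.
Qed.

Lemma g_mvt w v a b : a < b -> exists xi, a < xi < b /\
  gv w v b - gv w v a = (1 - w * (1 - tanh (w*xi+v) ^ 2)) * (b - a).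
Proof.
  intros H. destruct (MVT_cor2 (gv w v) (fun y => 1 - w * (1 - tanh (w*y+v) ^ 2)) a b H) as [c [E Hc]].
  intros; apply g_dpl. exists c; split; auto.
Qed.

Lemma tanh_opp z : tanh (- z) = - tanh z.
Proof. unfold Defs.tanh. rewrite Ropp_involutive. pose proof (tanh_den z). field. lra. Qed.

Section Piv.
Variable w : R.
Hypothesis Hw : 1 < w.
Definition tau := sqrt (1 - / w).
Definition cc := ln ((1 + tau) / (1 - tau)) / 2.

Lemma winv : 0 < / w < 1.
Proof. split. apply Rinv_0_lt_compat; lra. rewrite <- Rinv_1. apply Rinv_lt_contravar; lra. Qed.

Lemma tau_sq : tau ^ 2 = 1 - / w.
Proof. pose proof winv. unfold tau. simpl. rewrite Rmult_1_r. apply sqrt_sqrt. lra. Qed.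

Lemma tau_pos : 0 < tau < 1.
Proof.
  pose proof winv. pose proof tau_sq. assert (0 <= tau) by apply sqrt_pos. nra.
Qed.

Lemma tanh_cc : tanh cc = tau.
Proof.
  pose proof tau_pos. set (s := (1 + tau) / (1 - tau)).
  assert (Hs : 0 < s) by (unfold s; apply Rdiv_lt_0_compat; lra).
  assert (E : exp cc * exp cc = s).
  { rewrite <- exp_plus. replace (cc + cc) with (ln s) by (unfold cc, s; field). apply exp_ln; auto. }
  unfold Defs.tanh. rewrite exp_Ropp. pose proof (exp_pos cc).
  replace ((exp cc - / exp cc) / (exp cc + / exp cc)) with ((exp cc * exp cc - 1) / (exp cc * exp cc + 1)) by (field; nra).
  rewrite E. unfold s. field. lra.
Qed.

Lemma cc_pos : 0 < cc.
Proof.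
  pose proof tau_pos as Ht. destruct (Rle_lt_dec cc 0) as [Hc|Hc]; auto.
  pose proof (tanh_le cc 0 Hc) as H1. rewrite tanh_cc in H1. unfold Defs.tanh in H1.
  rewrite Ropp_0, exp_0 in H1. replace ((1-1)/(1+1)) with 0 in H1 by field. lra.
Qed.

Lemma dpos z : (z < - cc \/ cc < z) -> 0 < 1 - w * (1 - tanh z ^ 2).
Proof.
  intros Hz. pose proof tau_pos. pose proof tau_sq. pose proof winv.
  assert (tau ^ 2 < tanh z ^ 2).
  { destruct Hz as [Hz|Hz].
    - pose proof (tanh_incr _ _ Hz). rewrite tanh_opp, tanh_cc in H2. nra.
    - pose proof (tanh_incr _ _ Hz). rewrite tanh_cc in H2. nra. }
  assert (w * (1 - tanh z ^ 2) < w * (1 - tau ^2)) by nra.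
  rewrite H0 in H3. replace (w * (1 - (1 - / w))) with 1 in H3 by (field; lra). lra.
Qed.

Lemma dneg z : - cc < z < cc -> 1 - w * (1 - tanh z ^ 2) < 0.
Proof.
  intros [H1 H2]. pose proof tau_pos. pose proof tau_sq. pose proof winv.
  pose proof (tanh_incr _ _ H1). pose proof (tanh_incr _ _ H2). rewrite tanh_opp, tanh_cc in *.
  assert (tanh z ^ 2 < tau ^ 2) by nra.
  assert (w * (1 - tau ^2) < w * (1 - tanh z ^ 2)) by nra.
  rewrite H0 in H7. replace (w * (1 - (1 - / w))) with 1 in H7 by (field; lra). lra.
Qed.

Lemma locmax_exists v : loc_max (gv w v) ((- cc - v) / w).
Proof.
  pose proof cc_pos. pose proof winv. set (q := (-cc - v)/w).
  assert (Hq : w * q + v = - cc) by (unfold q; field; lra).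
  exists (2 * cc / w). split. apply Rdiv_lt_0_compat; lra.
  intros y Hy. apply Rabs_def2 in Hy.
  destruct (Rtotal_order y q) as [H1|[H1|H1]].
  - destruct (g_mvt w v y q H1) as [xi [Hxi E]].
    assert (0 < 1 - w * (1 - tanh (w * xi + v) ^ 2)) by (apply dpos; left; nra). nra.
  - subst; lra.
  - destruct (g_mvt w v q y H1) as [xi [Hxi E]].
    assert (1 - w * (1 - tanh (w * xi + v) ^ 2) < 0).
    { apply dneg. split. nra. assert (w * (y - q) < 2 * cc). { apply (Rmult_lt_reg_r (/ w)). lra.
      replace (w * (y - q) * / w) with (y - q) by (field; lra). lra. } nra. }
    nra.
Qed.

Lemma locmin_exists v : loc_min (gv w v) ((cc - v) / w).
Proof.
  pose proof cc_pos. pose proof winv. set (q := (cc - v)/w).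
  assert (Hq : w * q + v = cc) by (unfold q; field; lra).
  exists (2 * cc / w). split. apply Rdiv_lt_0_compat; lra.
  intros y Hy. apply Rabs_def2 in Hy.
  destruct (Rtotal_order y q) as [H1|[H1|H1]].
  - destruct (g_mvt w v y q H1) as [xi [Hxi E]].
    assert (1 - w * (1 - tanh (w * xi + v) ^ 2) < 0).
    { apply dneg. split. assert (w * (q - y) < 2 * cc). { apply (Rmult_lt_reg_r (/ w)). lra.
      replace (w * (q - y) * / w) with (q - y) by (field; lra). lra. } nra. nra. }
    nra.
  - subst; lra.
  - destruct (g_mvt w v q y H1) as [xi [Hxi E]].
    assert (0 < 1 - w * (1 - tanh (w * xi + v) ^ 2)) by (apply dpos; right; nra). nra.
Qed.

Lemma small_pos a b : 0 < a -> 0 < b -> exists d, 0 < d /\ d < a /\ d < b.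
Proof.
  intros. exists (Rmin a b / 2). pose proof (Rmin_l a b). pose proof (Rmin_r a b).
  assert (0 < Rmin a b) by (apply Rmin_glb_lt; auto). lra.
Qed.

Lemma locmax_unique v p : loc_max (gv w v) p -> p = (- cc - v) / w.
Proof.
  intros [eps [He Hm]]. pose proof cc_pos. pose proof winv.
  set (z := w * p + v).
  assert (Hp : p = (z - v) / w) by (unfold z; field; lra).
  destruct (Rtotal_order z (- cc)) as [Hz|[Hz|Hz]].
  - destruct (small_pos eps ((- cc - z) / w)) as [d [Hd1 [Hd2 Hd3]]]; auto.
    apply Rdiv_lt_0_compat; lra.
    assert (w * d < - cc - z). { apply (Rmult_lt_reg_r (/ w)). lra. replace (w*d*/w) with d by (field; lra). exact Hd3. }
    specialize (Hm (p + d)). rewrite Rabs_right in Hm by lra.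
    destruct (g_mvt w v p (p+d)) as [xi [Hxi E]]. lra.
    assert (0 < 1 - w * (1 - tanh (w * xi + v) ^ 2)) by (apply dpos; left; unfold z in *; nra).
    exfalso. specialize (Hm ltac:(lra)). nra.
  - rewrite Hp, Hz. reflexivity.
  - destruct (Rle_lt_dec z cc) as [Hz2|Hz2].
    + destruct (small_pos eps ((z + cc) / w)) as [d [Hd1 [Hd2 Hd3]]]; auto.
      apply Rdiv_lt_0_compat; lra.
      assert (w * d < z + cc). { apply (Rmult_lt_reg_r (/ w)). lra. replace (w*d*/w) with d by (field; lra). exact Hd3. }
      specialize (Hm (p - d)). rewrite Rabs_left in Hm by lra.
      destruct (g_mvt w v (p-d) p) as [xi [Hxi E]]. lra.
      assert (1 - w * (1 - tanh (w * xi + v) ^ 2) < 0) by (apply dneg; unfold z in *; split; nra).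
      exfalso. specialize (Hm ltac:(lra)). nra.
    + specialize (Hm (p + eps/2)). rewrite Rabs_right in Hm by lra.
      destruct (g_mvt w v p (p+eps/2)) as [xi [Hxi E]]. lra.
      assert (0 < 1 - w * (1 - tanh (w * xi + v) ^ 2)) by (apply dpos; right; unfold z in *; nra).
      exfalso. specialize (Hm ltac:(lra)). nra.
Qed.

Lemma locmin_unique v p : loc_min (gv w v) p -> p = (cc - v) / w.
Proof.
  intros [eps [He Hm]]. pose proof cc_pos. pose proof winv.
  set (z := w * p + v).
  assert (Hp : p = (z - v) / w) by (unfold z; field; lra).
  destruct (Rtotal_order z cc) as [Hz|[Hz|Hz]].
  - destruct (Rle_lt_dec (-cc) z) as [Hz2|Hz2].
    + destruct (small_pos eps ((cc - z) / w)) as [d [Hd1 [Hd2 Hd3]]]; auto.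
      apply Rdiv_lt_0_compat; lra.
      assert (w * d < cc - z). { apply (Rmult_lt_reg_r (/ w)). lra. replace (w*d*/w) with d by (field; lra). exact Hd3. }
      specialize (Hm (p + d)). rewrite Rabs_right in Hm by lra.
      destruct (g_mvt w v p (p+d)) as [xi [Hxi E]]. lra.
      assert (1 - w * (1 - tanh (w * xi + v) ^ 2) < 0) by (apply dneg; unfold z in *; split; nra).
      exfalso. specialize (Hm ltac:(lra)). nra.
    + specialize (Hm (p - eps/2)). rewrite Rabs_left in Hm by lra.
      destruct (g_mvt w v (p-eps/2) p) as [xi [Hxi E]]. lra.
      assert (0 < 1 - w * (1 - tanh (w * xi + v) ^ 2)) by (apply dpos; left; unfold z in *; nra).
      exfalso. specialize (Hm ltac:(lra)). nra.
  - rewrite Hp, Hz. reflexivity.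
  - destruct (small_pos eps ((z - cc) / w)) as [d [Hd1 [Hd2 Hd3]]]; auto.
    apply Rdiv_lt_0_compat; lra.
    assert (w * d < z - cc). { apply (Rmult_lt_reg_r (/ w)). lra. replace (w*d*/w) with d by (field; lra). exact Hd3. }
    specialize (Hm (p - d)). rewrite Rabs_left in Hm by lra.
    destruct (g_mvt w v (p-d) p) as [xi [Hxi E]]. lra.
    assert (0 < 1 - w * (1 - tanh (w * xi + v) ^ 2)) by (apply dpos; right; unfold z in *; nra).
    exfalso. specialize (Hm ltac:(lra)). nra.
Qed.

Lemma eps_unique {A} (P : A -> Prop) (a0 : A) (q : A) : P q -> (forall p, P p -> p = q) ->
  epsilon (inhabits a0) P = q.
Proof.
  intros Hq Hu. apply Hu. apply epsilon_spec. exists q; auto.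
Qed.

Lemma pm_v_eq v : pm_v w v = (- cc - v) / w.
Proof. unfold pm_v. apply eps_unique. apply locmax_exists. apply locmax_unique. Qed.
Lemma pp_v_eq v : pp_v w v = (cc - v) / w.
Proof. unfold pp_v. apply eps_unique. apply locmin_exists. apply locmin_unique. Qed.

Lemma pivot_minus_eq : pivot_minus w = - tau.
Proof.
  unfold pivot_minus. pose proof winv as Hwi.
  assert (H : gv w (v_minus w) (pm_v w (v_minus w)) = 0).
  { unfold v_minus. apply epsilon_spec. exists (w * tau - cc).
    rewrite pm_v_eq. unfold gv. replace (w * ((- cc - (w * tau - cc)) / w) + (w * tau - cc)) with (- cc) by (field; lra).
    rewrite tanh_opp, tanh_cc. field; lra. }
  rewrite pm_v_eq in *. unfold gv in H.
  replace (w * ((- cc - v_minus w) / w) + v_minus w) with (- cc) in H by (field; lra).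
  rewrite tanh_opp, tanh_cc in H. lra.
Qed.

Lemma pivot_plus_eq : pivot_plus w = tau.
Proof.
  unfold pivot_plus. pose proof winv as Hwi.
  assert (H : gv w (v_plus w) (pp_v w (v_plus w)) = 0).
  { unfold v_plus. apply epsilon_spec. exists (cc - w * tau).
    rewrite pp_v_eq. unfold gv. replace (w * ((cc - (cc - w * tau)) / w) + (cc - w * tau)) with cc by (field; lra).
    rewrite tanh_cc. field; lra. }
  rewrite pp_v_eq in *. unfold gv in H.
  replace (w * ((cc - v_plus w) / w) + v_plus w) with cc in H by (field; lra).
  rewrite tanh_cc in H. lra.
Qed.

End Piv.

Lemma fp_same_kappa w b x y (kap : R -> nat) : 0 < w ->
  tanh (w*x+b) = x -> tanh (w*y+b) = y ->
  (1 < w -> forall z, kap z = kappa_pivot w z) -> kap x = kap y -> x = y.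
Proof.
  intros Hw Fx Fy Hk Hxy.
  assert (Main : forall x y, tanh (w*x+b) = x -> tanh (w*y+b) = y -> kap x = kap y -> x < y -> False).
  { clear x y Fx Fy Hxy. intros x y Fx Fy Hxy Hlt.
    destruct (Rle_lt_dec w 1) as [Hw1|Hw1].
    - exact (fp_small w b x y ltac:(lra) Fx Fy Hlt).
    - rewrite !(Hk Hw1) in Hxy. unfold kappa_pivot in Hxy.
      rewrite (pivot_minus_eq w Hw1), (pivot_plus_eq w Hw1) in Hxy.
      pose proof (tau_sq w Hw1). assert (0 <= tau w) by apply sqrt_pos.
      apply (fp_big w b x y (tau w) Hw1 H0 H Fx Fy Hlt).
      destruct (Rle_dec x (- tau w)); destruct (Rlt_dec x (tau w));
      destruct (Rle_dec y (- tau w)); destruct (Rlt_dec y (tau w)); try discriminate; lra. }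
  destruct (Rtotal_order x y) as [H|[H|H]]; auto; exfalso.
  - exact (Main x y Fx Fy Hxy H).
  - exact (Main y x Fy Fx (eq_sym Hxy) H).
Qed.

Import ListNotations.

Definition lcv (vs : nat -> list R) (v : list R) : Prop :=
  (forall t, length (vs t) = length v) /\
  (forall k, is_lim_seq (fun t => nth k (vs t) 0) (nth k v 0)).

Lemma dot_cont c : forall v vs, lcv vs v -> is_lim_seq (fun t => dot c (vs t)) (dot c v).
Proof.
  induction c as [|a c IH]; intros v vs [Hl Hn].
  - simpl. apply is_lim_seq_const.
  - destruct v as [|h v].
    + apply (is_lim_seq_ext (fun _ => 0)). intros t. specialize (Hl t).
      destruct (vs t); simpl in *; [reflexivity | discriminate]. simpl. apply is_lim_seq_const.
    + apply (is_lim_seq_ext (fun t => a * nth 0 (vs t) 0 + dot c (tl (vs t)))).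
      { intros t. specialize (Hl t). destruct (vs t); simpl in *; [discriminate|reflexivity]. }
      simpl. apply is_lim_seq_plus'.
      * apply (is_lim_seq_scal_l _ a h (Hn O)).
      * apply IH. split.
        -- intros t. specialize (Hl t). destruct (vs t); simpl in *; lia.
        -- intros k. apply (is_lim_seq_ext (fun t => nth (S k) (vs t) 0)).
           { intros t. destruct (vs t); simpl; auto. destruct k; auto. }
           apply (Hn (S k)).
Qed.

Lemma layer_cont (l : layer) vs v : (forall x, continuity_pt (snd l) x) -> lcv vs v ->
  lcv (fun t => eval_layer l (vs t)) (eval_layer l v).
Proof.
  destruct l as [[W b] sigma]. simpl. intros Hs [Hl Hn]. split.
  - intros t. unfold eval_layer. rewrite !length_map. reflexivity.
  - intros k. unfold eval_layer.
    destruct (Nat.lt_ge_cases k (length (combine W b))) as [Hk|Hk].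
    + set (f := fun rb : list R * R => sigma (dot (fst rb) v + snd rb)).
      apply (is_lim_seq_ext (fun t => sigma (dot (fst (nth k (combine W b) (([]:list R),0:R))) (vs t) + snd (nth k (combine W b) (([]:list R),0:R))))).
      { intros t. rewrite (nth_indep _ 0 (sigma (dot (fst (([]:list R),0:R)) (vs t) + snd (([]:list R),0:R)))) by (rewrite length_map; auto).
        rewrite (map_nth (fun rb : list R * R => sigma (dot (fst rb) (vs t) + snd rb))). reflexivity. }
      rewrite (nth_indep _ 0 (f (([]:list R),0:R))) by (rewrite length_map; auto).
      unfold f. rewrite (map_nth (fun rb : list R * R => sigma (dot (fst rb) v + snd rb))).
      apply is_lim_seq_continuous. apply Hs.
      apply is_lim_seq_plus'. apply dot_cont. split; auto. apply is_lim_seq_const.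
    + rewrite nth_overflow by (rewrite length_map; auto).
      apply (is_lim_seq_ext (fun _ => 0)). intros t. rewrite nth_overflow by (rewrite length_map; auto). auto.
      apply is_lim_seq_const.
Qed.

Lemma fold_cont ls : List.Forall (fun l : layer => forall x : R, continuity_pt (snd l) x) ls ->
  forall vs v, lcv vs v ->
  lcv (fun t => fold_left (fun acc l => eval_layer l acc) ls (vs t))
      (fold_left (fun acc l => eval_layer l acc) ls v).
Proof.
  induction 1 as [|l ls Hl Hls IH]; intros vs v H; simpl; auto.
  apply IH. apply layer_cont; auto.
Qed.

Lemma ffn_cont g vs v : is_ffn g -> lcv vs v -> is_lim_seq (fun t => g (vs t)) (g v).
Proof.
  intros [ls [c [c0 [Hc He]]]] H.
  rewrite He. apply (is_lim_seq_ext (fun t => eval_ffn ls c c0 (vs t))). intros; rewrite He; auto.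
  unfold eval_ffn. apply is_lim_seq_plus'. apply dot_cont. apply fold_cont; auto. apply is_lim_seq_const.
Qed.

Lemma lcv_app u vs v : lcv vs v -> lcv (fun t => u ++ vs t) (u ++ v).
Proof.
  intros [Hl Hn]. split.
  - intros t. rewrite !length_app, Hl. auto.
  - intros k. destruct (Nat.lt_ge_cases k (length u)).
    + rewrite app_nth1 by auto. apply (is_lim_seq_ext (fun _ => nth k u 0)).
      intros; rewrite app_nth1; auto. apply is_lim_seq_const.
    + rewrite app_nth2 by auto. apply (is_lim_seq_ext (fun t => nth (k - length u) (vs t) 0)).
      intros; rewrite app_nth2; auto. apply Hn.
Qed.

Lemma nth_map_seq {A} (f : nat -> A) n j d : (j < n)%nat -> nth j (map f (seq 0 n)) d = f j.
Proof.
  intros H. rewrite (nth_indep _ d (f 0%nat)) by (rewrite length_map, length_seq; auto).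
  rewrite map_nth, seq_nth by auto. reflexivity.
Qed.

Section Cascade.
Variable w : nat -> R.
Variable beta : nat -> list R -> R.
Variable ue : list R.
Let FB := fun s => fbar w beta s ue.

Lemma fbar_length x u : length (fbar w beta x u) = length x.
Proof. unfold fbar. rewrite length_map, length_seq. auto. Qed.

Lemma fbar_nth x u j : (j < length x)%nat ->
  nth j (fbar w beta x u) 0 = tanh (w j * nth j x 0 + beta j (u ++ firstn j x)).
Proof. intros H. unfold fbar. rewrite nth_map_seq by auto. reflexivity. Qed.

Lemma fbar_firstn k x u : firstn k (fbar w beta x u) = fbar w beta (firstn k x) u.
Proof.
  apply nth_ext with (d := 0) (d' := 0).
  - rewrite length_firstn, !fbar_length, length_firstn. auto.
  - intros j Hj. rewrite length_firstn, fbar_length in Hj.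
    rewrite nth_firstn. assert (j <? k = true)%nat by (apply Nat.ltb_lt; lia). rewrite H.
    rewrite !fbar_nth by (try rewrite length_firstn; lia).
    rewrite (nth_firstn k x j), H, firstn_firstn. replace (Nat.min j k) with j by lia. reflexivity.
Qed.

Lemma iter_length t x : length (Nat.iter t FB x) = length x.
Proof. induction t; simpl; auto. unfold FB. rewrite fbar_length. auto. Qed.

Lemma iter_firstn t k x : firstn k (Nat.iter t FB x) = Nat.iter t FB (firstn k x).
Proof. induction t; simpl; auto. unfold FB at 1. rewrite fbar_firstn, IHt. reflexivity. Qed.

Definition sq j x t := nth j (Nat.iter t FB (firstn (S j) x)) 0.

Lemma sq_S j x t : (j < length x)%nat ->
  sq j x (S t) = tanh (w j * sq j x t + beta j (ue ++ Nat.iter t FB (firstn j x))).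
Proof.
  intros H. unfold sq. replace (Nat.iter (S t) FB (firstn (S j) x)) with (FB (Nat.iter t FB (firstn (S j) x))) by reflexivity.
  unfold FB at 1. rewrite fbar_nth.
  - rewrite iter_firstn, firstn_firstn. replace (Nat.min j (S j)) with j by lia. reflexivity.
  - rewrite iter_length, length_firstn. lia.
Qed.

Lemma nth_iter_prefix k j x t : (k < j)%nat ->
  nth k (Nat.iter t FB (firstn j x)) 0 = sq k x t.
Proof.
  intros H. unfold sq.
  assert (H0 : (k <? S k)%nat = true) by (apply Nat.ltb_lt; lia).
  transitivity (nth k (firstn (S k) (Nat.iter t FB (firstn j x))) 0).
  { rewrite nth_firstn, H0. reflexivity. }
  rewrite iter_firstn, firstn_firstn. replace (Nat.min (S k) j) with (S k) by lia. reflexivity.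
Qed.

Lemma Sstar_eq j x : Sstar w beta ue j x = real (Lim_seq (sq j x)).
Proof. reflexivity. Qed.

Lemma cascade_conv x : (forall j, (j < length x)%nat -> 0 < w j) ->
  (forall j, (j < length x)%nat -> is_ffn (beta j)) ->
  forall j, (j < length x)%nat ->
  is_lim_seq (sq j x) (Sstar w beta ue j x) /\
  tanh (w j * Sstar w beta ue j x + beta j (ue ++ map (fun k => Sstar w beta ue k x) (seq 0 j))) = Sstar w beta ue j x.
Proof.
  intros Hw Hb j. induction j as [j IH] using lt_wf_ind. intros Hj.
  assert (Hl : lcv (fun t => Nat.iter t FB (firstn j x)) (map (fun k => Sstar w beta ue k x) (seq 0 j))).
  { split.
    - intros t. rewrite iter_length, length_firstn, length_map, length_seq. lia.
    - intros k. destruct (Nat.lt_ge_cases k j) as [Hk|Hk].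
      + rewrite nth_map_seq by auto. apply (is_lim_seq_ext (sq k x)).
        intros t. rewrite nth_iter_prefix; auto. apply (IH k Hk). lia.
      + rewrite nth_overflow by (rewrite length_map, length_seq; lia).
        apply (is_lim_seq_ext (fun _ => 0)). intros t. rewrite nth_overflow; auto.
        rewrite iter_length, length_firstn. lia. apply is_lim_seq_const. }
  assert (Hbl := ffn_cont (beta j) _ _ (Hb j Hj) (lcv_app ue _ _ Hl)).
  destruct (conv (w j) _ _ (sq j x) (Hw j Hj) Hbl) as [L [HL HF]].
  { intros t. apply sq_S; auto. }
  assert (E : Sstar w beta ue j x = L).
  { rewrite Sstar_eq. rewrite (is_lim_seq_unique _ _ HL). reflexivity. }
  rewrite E. split; [exact HL | exact HF].
Qed.

Lemma Sstar_agree (n : nat) (kappa : nat -> R -> nat) x y :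
  (forall j, (j < n)%nat -> 0 < w j) -> (forall j, (j < n)%nat -> is_ffn (beta j)) ->
  (forall j z, (j < n)%nat -> 1 < w j -> kappa j z = kappa_pivot (w j) z) ->
  length x = length y -> (length x <= n)%nat ->
  etabar w beta ue kappa x = etabar w beta ue kappa y ->
  forall j, (j < length x)%nat -> Sstar w beta ue j x = Sstar w beta ue j y.
Proof.
  intros Hw Hb Hk Hlen Hn Het j. induction j as [j IH] using lt_wf_ind. intros Hj.
  destruct (cascade_conv x (fun j H => Hw j ltac:(lia)) (fun j H => Hb j ltac:(lia)) j Hj) as [_ Fx].
  destruct (cascade_conv y (fun j H => Hw j ltac:(lia)) (fun j H => Hb j ltac:(lia)) j ltac:(lia)) as [_ Fy].
  assert (Eb : map (fun k => Sstar w beta ue k x) (seq 0 j) = map (fun k => Sstar w beta ue k y) (seq 0 j)).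
  { apply map_ext_in. intros k Hk0. apply in_seq in Hk0. apply IH; lia. }
  rewrite Eb in Fx.
  apply (fp_same_kappa (w j) _ _ _ (kappa j) (Hw j ltac:(lia)) Fx Fy).
  - intros H z. apply Hk; auto. lia.
  - assert (E := f_equal (fun l => nth j l 0%nat) Het). simpl in E. unfold etabar in E.
    rewrite !nth_map_seq in E by lia. exact E.
Qed.

End Cascade.

Lemma nat_min (P : nat -> Prop) n : P n -> exists m, P m /\ forall k, P k -> (m <= k)%nat.
Proof.
  revert P. induction n as [n IH] using lt_wf_ind. intros P Hn.
  destruct (classic (exists k, (k < n)%nat /\ P k)) as [[k [Hk Pk]]|N].
  - exact (IH k Hk P Pk).
  - exists n. split; auto. intros k Pk. destruct (Nat.lt_ge_cases k n); auto.
    exfalso. apply N. eauto.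
Qed.

Lemma lex_min i : forall (Q : list nat -> Prop), (forall s, Q s -> length s = i) -> (exists s, Q s) ->
  exists s, Q s /\ forall s', Q s' -> lex_le s s'.
Proof.
  induction i as [|i IH]; intros Q HL [s0 Hs0].
  - exists s0. split; auto. intros s' _. specialize (HL s0 Hs0). destruct s0; [simpl; auto | discriminate].
  - destruct s0 as [|h0 t0]; [specialize (HL _ Hs0); discriminate|].
    destruct (nat_min (fun h => exists tl, Q (h :: tl)) h0 (ex_intro _ t0 Hs0)) as [m [[tl Hm] Hmin]].
    destruct (IH (fun tl => Q (m :: tl))) as [tmin [Ht Htmin]].
    { intros s Hs. specialize (HL _ Hs). simpl in HL. lia. }
    { eauto. }
    exists (m :: tmin). split; auto. intros s' Hs'.
    destruct s' as [|h' t']; [specialize (HL _ Hs'); discriminate|].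
    simpl. assert (m <= h')%nat by (apply Hmin; eauto).
    destruct (Nat.eq_dec m h') as [E|E].
    + right. subst. split; auto.
    + left. lia.
Qed.

Lemma eqclos_dom D r x y : eqclos D r x y -> D x /\ D y.
Proof. induction 1; intuition. Qed.

Lemma sim_dom w beta ue X' U {Sigma : Type} (lam : list R -> Sigma) i x y :
  (forall z u, X' z -> U u -> X' (fbar w beta z u)) ->
  sim w beta ue X' U lam i x y -> Xpre X' i x /\ Xpre X' i y.
Proof.
  intros Hinv. induction 1.
  - exact (eqclos_dom _ _ _ _ H).
  - auto.
  - tauto.
  - tauto.
  - destruct IHsim as [[z1 [Hz1 E1]] [z2 [Hz2 E2]]]. split.
    + exists (fbar w beta z1 u). split; auto. subst. rewrite fbar_firstn. auto.
    + exists (fbar w beta z2 v). split; auto. subst. rewrite fbar_firstn. auto.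
Qed.

Theorem proposition11
  (n m : nat) (w : nat -> R) (beta : nat -> list R -> R)
  (U : list R -> Prop) (X' : list R -> Prop)
  (Sigma : Type) (lam : list R -> Sigma) (ue : list R)
  (kappa : nat -> R -> nat)
  (Hw : forall j, (j < n)%nat -> 0 < w j)
  (Hbeta : forall j, (j < n)%nat -> is_ffn (beta j))
  (HU : forall u, U u -> length u = m)
  (HSigma : exists l : list Sigma, forall s, In s l)
  (HX' : forall x, X' x -> length x = n /\ List.Forall (fun r => -1 <= r <= 1) x)
  (Hinv : forall x u, X' x -> U u -> X' (fbar w beta x u))
  (Hue : U ue)
  (Hkappa : forall j x, (j < n)%nat -> (kappa j x = 1 \/ kappa j x = 2 \/ kappa j x = 3)%nat)
  (Hkappa_piv : forall j x, (j < n)%nat -> 1 < w j -> kappa j x = kappa_pivot (w j) x) :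
  forall i, (1 <= i <= n)%nat ->
  forall x y, Xpre X' i x -> Xpre X' i y ->
    rho w beta ue X' U lam kappa i x = rho w beta ue X' U lam kappa i y ->
    sim w beta ue X' U lam i x y.
Proof.
  intros i Hi x y Hx Hy Hr.
  assert (Hlen : forall a, Xpre X' i a -> length a = i).
  { intros a [z [Hz E]]. subst. rewrite length_firstn. destruct (HX' z Hz) as [Hl _]. lia. }
  assert (Spec : forall a, Xpre X' i a ->
    (exists b, sim w beta ue X' U lam i a b /\ etabar w beta ue kappa b = rho w beta ue X' U lam kappa i a)).
  { intros a Ha. unfold rho.
    set (Q := fun s => exists b, sim w beta ue X' U lam i a b /\ etabar w beta ue kappa b = s).
    destruct (lex_min i Q) as [s [Hs Hsm]].
    { intros s [b [Hb E]]. subst s. unfold etabar. rewrite length_map, length_seq.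
      apply Hlen. apply (sim_dom _ _ _ _ _ _ _ _ _ Hinv Hb). }
    { exists (etabar w beta ue kappa a). exists a. split; auto. apply sim_refl; auto. }
    match goal with |- exists b, _ /\ _ = epsilon ?I ?P =>
      assert (HP : P (epsilon I P)) end.
    { apply epsilon_spec. exists s. split; auto. intros b Hb. apply Hsm. exists b; auto. }
    destruct HP as [[b [Hb E]] _]. exists b. split; auto. }
  destruct (Spec x Hx) as [x' [Hxx' Ex]]. destruct (Spec y Hy) as [y' [Hyy' Ey]].
  destruct (sim_dom _ _ _ _ _ _ _ _ _ Hinv Hxx') as [_ Hx'].
  destruct (sim_dom _ _ _ _ _ _ _ _ _ Hinv Hyy') as [_ Hy'].
  assert (Het : etabar w beta ue kappa x' = etabar w beta ue kappa y') by congruence.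
  assert (HS : Sbar w beta ue x' = Sbar w beta ue y').
  { unfold Sbar. rewrite (Hlen x' Hx'), (Hlen y' Hy'). apply map_ext_in. intros j Hj. apply in_seq in Hj.
    apply (Sstar_agree w beta ue n kappa x' y' Hw Hbeta Hkappa_piv); try rewrite (Hlen x' Hx'); try rewrite (Hlen y' Hy'); auto; lia. }
  apply sim_trans with x'; auto.
  apply sim_trans with y'.
  - apply sim_base. apply eqc_base; auto.
  - apply sim_sym; auto.
Qed.
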